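(* Let $\alpha\neq\beta$ and let $(g_n)$ be as in the context. For $n\ge1$ write $$g_n(x)=\sum_{k=0}^{n-1}A_k^{(n)}(\alpha-\beta)^{-k}(x-\beta)^k .$$ Then $A_0^{(n)}=\beta^n$ and, for $1\le k<n$, $$A_k^{(n)}=(n-k)\sum_{j=1}^{k}\frac1j\binom{n-1}{j-1}\binom{k-1}{j-1}\alpha^j\beta^{n-j}.$$
   Context: Fix complex numbers $\alpha\neq\beta$. Define polynomials $g_n(x)\in\mathbb{C}[x]$ recursively by $g_0(x)=1$ and, for $n\ge1$, $$(x-\alpha)(\alpha-\beta)^{n-1}g_n(x)=\alpha(x-\beta)^n g_{n-1}(\alpha)-x(\alpha-\beta)^n g_{n-1}(x).$$ (The right-hand side vanishes at $x=\alpha$, so it is divisible by $x-\alpha$ and $g_n$ is a uniquely determined polynomial; for $n\ge1$ it has degree at most $n-1$ in $x$.) *)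

(* Defs.v *)
From HB Require Import structures.
From mathcomp Require Import all_boot all_order all_algebra.
From mathcomp Require Import reals.
From mathcomp.real_closed Require Import complex.
Set Implicit Arguments. Unset Strict Implicit. Unset Printing Implicit Defensive.
Import Order.TTheory GRing.Theory Num.Theory.
Local Open Scope ring_scope.

Definition Acoef (R : realType) (al be : R[i]) (n k : nat) : R[i] :=
  if k == 0%N then be ^+ n
  else (n - k)%:R *
       \sum_(1 <= j < k.+1)
          (j%:R)^-1 * ('C(n.-1, j.-1))%:R * ('C(k.-1, j.-1))%:R
            * al ^+ j * be ^+ (n - j).

(* Main.v *)
Require Import Defs.
From HB Require Import structures.
From mathcomp Require Import all_boot all_order all_algebra.
From mathcomp Require Import reals.
From mathcomp.real_closed Require Import complex.
From mathcomp Require Import ring zify.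
Import Order.TTheory GRing.Theory Num.Theory.
Local Open Scope ring_scope.

Section Comb.
Variable F : fieldType.
Lemma alg_id (u v Q Q1 Q2 a b X Y r : F) : v = u + 1 -> Q1 = Q + 1 -> Q2 = Q + 2 ->
 u != 0 -> v != 0 -> u * X = r * Y -> u * b = (r + Q + 1) * a ->
 Q2/v*(b+a)*X - Q1/v*(b+a)*(X+Y) + Q1/u*a*Y - Q1/v*b*X + Q/v*b*(X+Y) = 0.
Proof.
move=> -> -> -> hu hu1 hX hb.
have -> : (Q+2)/(u+1)*(b+a)*X - (Q+1)/(u+1)*(b+a)*(X+Y) + (Q+1)/u*a*Y - (Q+1)/(u+1)*b*X + Q/(u+1)*b*(X+Y)
   = (a*(u*X) + (Q+1)*a*Y - (u*b)*Y)/(u*(u+1)).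
  by field; rewrite hu hu1.
rewrite hX hb.
have -> : a * (r * Y) + (Q + 1) * a * Y - (r + Q + 1) * a * Y = 0 by ring.
by rewrite mul0r.
Qed.
End Comb.

Section Comb2.
Variable F : numFieldType.
Lemma coef_id (p q i : nat) :
  (q.+2)%:R * (i.+1%:R)^-1 * ('C((p+q).+2,i))%:R * ('C(p,i))%:R
  - (q.+1)%:R * (i.+1%:R)^-1 * ('C((p+q).+2,i))%:R * ('C(p.+1,i))%:R
  + (q.+1)%:R * (i%:R)^-1 * ('C((p+q).+1,i.-1))%:R * ('C(p,i.-1))%:R
  - (q.+1)%:R * (i.+1%:R)^-1 * ('C((p+q).+1,i))%:R * ('C(p,i))%:R
  + q%:R * (i.+1%:R)^-1 * ('C((p+q).+1,i))%:R * ('C(p.+1,i))%:R = 0 :> F.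
Proof.
case: i => [|j].
  rewrite !bin0 invr0 /= mulr1n invr1 !mulr1 mulr0 ?mul0r; ring.
rewrite -/((j.+1).-1) /= -/(binomial _ _).
set a := ('C((p+q).+1, j))%:R : F; set b := ('C((p+q).+1, j.+1))%:R : F.
set X := ('C(p, j.+1))%:R : F; set Y := ('C(p, j))%:R : F.
have -> : ('C((p+q).+2, j.+1))%:R = b + a :> F by rewrite /a /b -natrD -binS.
have -> : ('C(p.+1, j.+1))%:R = X + Y :> F by rewrite /X /Y -natrD -binS.
have [le_jp|lt_pj] := leqP j p; last first.
  have X0 : X = 0 by rewrite /X bin_small // ltnW.
  have Y0 : Y = 0 by rewrite /Y bin_small.
  rewrite X0 Y0 !mulr0 !addr0 subr0 !mulr0; ring.
have [r er] : exists r, p = (j + r)%N by exists (p - j)%N; rewrite subnKC.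
have hX : (j.+1)%:R * X = r%:R * Y :> F.
  by rewrite /X /Y -!natrM mul_bin_left er addKn.
have hb : (j.+1)%:R * b = (r%:R + q%:R + 1) * a :> F.
  rewrite /a /b -!natrM mul_bin_left er -addnS -addnA addKn.
  by rewrite natrM !natrD -natr1 addrA.
apply: (@alg_id F _ _ _ _ _ a b X Y _ _ _ _ _ _ hX hb).
- by rewrite natr1.
- by rewrite natr1.
- by rewrite -addn2 natrD.
- by rewrite pnatr_eq0.
- by rewrite pnatr_eq0.
Qed.
End Comb2.

Section Main.
Variable R : realType.
Variables al be : R[i].
Local Notation A := (Acoef al be).

Lemma AcoefS n k : A n k.+1 = \sum_(i < k.+1)
  ((n - k.+1)%:R * (i.+1%:R)^-1 * ('C(n.-1, i))%:R * ('C(k, i))%:R) * (al ^+ i.+1 * be ^+ (n - i.+1)).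
Proof.
rewrite /Acoef /=. rewrite big_add1 /=. rewrite big_mkord big_distrr; apply: eq_bigr => i _.
by rewrite /= !mulrA.
Qed.

Lemma Acoef_big n k : (n <= k.+1)%N -> A n k.+1 = 0.
Proof. by move=> h; rewrite /Acoef /= (_ : n - k.+1 = 0)%N ?mul0r //; lia. Qed.

Lemma Acoef1 n : A n 1 = (n - 1)%:R * (al * be ^+ (n - 1)).
Proof.
rewrite AcoefS big_ord1 /= !bin0 invr1 !mulr1 expr1; done.
Qed.


Lemma gen_case p q :
  A (p+q).+3 p.+1 - A (p+q).+3 p.+2 + (al - be) * A (p+q).+2 p.+1 + be * A (p+q).+2 p.+2 = 0.
Proof.
rewrite !AcoefS.
have -> : ((p+q).+3 - p.+1 = q.+2)%N by lia.
have -> : ((p+q).+3 - p.+2 = q.+1)%N by lia.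
have -> : ((p+q).+2 - p.+1 = q.+1)%N by lia.
have -> : ((p+q).+2 - p.+2 = q)%N by lia.
rewrite /=.
set T := fun i : nat => al ^+ i.+1 * be ^+ ((p+q).+2 - i).
have e1 : \sum_(i < p.+1) ((q.+2)%:R * (i.+1%:R)^-1 * ('C((p+q).+2, i))%:R * ('C(p, i))%:R) *
      (al ^+ i.+1 * be ^+ ((p+q).+3 - i.+1))
   = \sum_(i < p.+2) ((q.+2)%:R * (i.+1%:R)^-1 * ('C((p+q).+2, i))%:R * ('C(p, i))%:R) * T i.
  by rewrite [RHS]big_ord_recr /= (@bin_small p p.+1) // mulr0 mul0r addr0.
have e2 : \sum_(i < p.+2) ((q.+1)%:R * (i.+1%:R)^-1 * ('C((p+q).+2, i))%:R * ('C(p.+1, i))%:R) *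
      (al ^+ i.+1 * be ^+ ((p+q).+3 - i.+1))
   = \sum_(i < p.+2) ((q.+1)%:R * (i.+1%:R)^-1 * ('C((p+q).+2, i))%:R * ('C(p.+1, i))%:R) * T i.
  by [].
have e3 : al * \sum_(i < p.+1) ((q.+1)%:R * (i.+1%:R)^-1 * ('C((p+q).+1, i))%:R * ('C(p, i))%:R) *
      (al ^+ i.+1 * be ^+ ((p+q).+2 - i.+1))
   = \sum_(i < p.+2) ((q.+1)%:R * (i%:R)^-1 * ('C((p+q).+1, i.-1))%:R * ('C(p, i.-1))%:R) * T i.
  rewrite [RHS]big_ord_recl /= invr0 mulr0 !mul0r add0r big_distrr; apply: eq_bigr => i _ /=.
  by rewrite /T (_ : bump 0 i = i.+1) // add0n !exprS; ring.
have e4 : be * \sum_(i < p.+1) ((q.+1)%:R * (i.+1%:R)^-1 * ('C((p+q).+1, i))%:R * ('C(p, i))%:R) *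
      (al ^+ i.+1 * be ^+ ((p+q).+2 - i.+1))
   = \sum_(i < p.+2) ((q.+1)%:R * (i.+1%:R)^-1 * ('C((p+q).+1, i))%:R * ('C(p, i))%:R) * T i.
  rewrite [RHS]big_ord_recr /= (@bin_small p p.+1) // mulr0 mul0r addr0 big_distrr; apply: eq_bigr => i _ /=.
  have hi : (i < (p+q).+2)%N by have := ltn_ord i; lia.
  by rewrite /T -(subnSK hi) (exprS be); ring.
have e5 : be * \sum_(i < p.+2) ((q%:R) * (i.+1%:R)^-1 * ('C((p+q).+1, i))%:R * ('C(p.+1, i))%:R) *
      (al ^+ i.+1 * be ^+ ((p+q).+2 - i.+1))
   = \sum_(i < p.+2) (q%:R * (i.+1%:R)^-1 * ('C((p+q).+1, i))%:R * ('C(p.+1, i))%:R) * T i.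
  rewrite big_distrr; apply: eq_bigr => i _ /=.
  have hi : (i < (p+q).+2)%N by have := ltn_ord i; lia.
  by rewrite /T -(subnSK hi) (exprS be); ring.
rewrite mulrBl e1 e2 e3 e4 e5 -!sumrB -!big_split /=.
apply: big1 => i _.
by rewrite -[RHS](mul0r (T i)) -(coef_id _ p q i); ring.
Qed.

Definition sh (a : nat -> R[i]) k := if k is k'.+1 then a k' else 0.

Lemma coef_zero m k : (k < m.+3)%N -> k != m.+1 ->
  sh (A m.+1) k - A m.+1 k + (al - be) * sh (A m) k + be * A m k = 0.
Proof.
case: k => [|k] hk hne.
  by rewrite /sh /Acoef /= exprS; ring.
rewrite /sh; case: k hk hne => [|k] hk hne.
  case: m hk hne => [|m] // _ _.
  rewrite !Acoef1 /Acoef /= !subn1 /= !exprS; ring.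
have [hkm|hkm] := leqP k.+2 m; last first.
  have ekm : k = m by move: hk hne hkm; clear; lia.
  subst k.
  by rewrite !Acoef_big ?(leqW (leqnSn _)) //; ring.
have [q eq] : exists q, m = (k + q).+2 by exists (m - k.+2)%N; move: hkm; clear; lia.
subst m; exact: gen_case.
Qed.

Definition Zp := (al - be)^-1 *: ('X - be%:P).
Definition S N (a : nat -> R[i]) := \sum_(k < N) a k *: Zp ^+ k.

Lemma S_widen N a : a N = 0 -> S N.+1 a = S N a.
Proof. by move=> h; rewrite /S big_ord_recr /= h scale0r addr0. Qed.

Lemma S_mulZ N a : Zp * S N a = S N.+1 (sh a).
Proof.
rewrite /S big_ord_recl /= scale0r add0r mulr_sumr; apply: eq_bigr => i _.
by rewrite /= -scalerAr -exprS (_ : bump 0 i = i.+1).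
Qed.

Lemma S_scale c N a : c *: S N a = S N (fun k => c * a k).
Proof. by rewrite /S scaler_sumr; apply: eq_bigr => i _; rewrite scalerA. Qed.

Lemma S_add N a b : S N a + S N b = S N (fun k => a k + b k).
Proof. by rewrite /S -big_split; apply: eq_bigr => i _; rewrite scalerDl. Qed.

Lemma S_sub N a b : S N a - S N b = S N (fun k => a k - b k).
Proof. by rewrite /S -sumrB; apply: eq_bigr => i _; rewrite scalerBl. Qed.

Lemma S_single N a j : (j < N)%N -> (forall k, (k < N)%N -> k != j -> a k = 0) ->
  S N a = a j *: Zp ^+ j.
Proof.
move=> hj ha; rewrite /S (bigD1 (Ordinal hj)) //= big1 ?addr0 // => i hi.
rewrite ha ?scale0r //; apply: contraNneq hi => e; apply/eqP; exact: val_inj.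
Qed.

Definition P n := S n.+1 (A n).

Lemma P_step m : exists lam,
  (Zp - 1) * P m.+1 + ((al - be) *: Zp + be%:P) * P m = lam *: Zp ^+ m.+1.
Proof.
have H : (Zp - 1) * P m.+1 + ((al - be) *: Zp + be%:P) * P m =
  S m.+3 (fun k => sh (A m.+1) k - A m.+1 k + ((al - be) * sh (A m) k + be * A m k)).
  rewrite /P mulrBl mulrDl mul1r -[(al - be) *: Zp * _]scalerAl mul_polyC !S_mulZ.
  rewrite -(@S_widen m.+2 (A m.+1)) ?Acoef_big //.
  rewrite -(@S_widen m.+2 (sh (A m))); last by rewrite /sh Acoef_big.
  rewrite -(@S_widen m.+1 (A m)) ?Acoef_big //.
  rewrite -(@S_widen m.+2 (A m)) ?Acoef_big ?(leqW (leqnSn _)) //.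
  by rewrite !S_scale S_sub !S_add.
rewrite H (@S_single _ _ m.+1) //; first by eexists.
move=> k hk hne; rewrite addrA; exact: coef_zero.
Qed.

Hypothesis hd : al != be.
Let d := al - be.
Lemma dnz : d != 0. Proof. by rewrite subr_eq0. Qed.

Lemma hY : 'X - be%:P = d *: Zp.
Proof. by rewrite /Zp scalerA divff ?dnz // scale1r. Qed.

Lemma hX : 'X = d *: Zp + be%:P.
Proof. by rewrite -hY subrK. Qed.

Lemma hXa : 'X - al%:P = d *: (Zp - 1).
Proof. by rewrite scalerBr -hY alg_polyC polyCB /d; ring. Qed.

Lemma Zp_al : Zp.[al] = 1.
Proof. by rewrite /Zp hornerZ hornerXsubC mulVf ?dnz. Qed.

Lemma Zp_be : Zp.[be] = 0.
Proof. by rewrite /Zp hornerZ hornerXsubC subrr mulr0. Qed.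

Lemma gP (g : nat -> {poly R[i]}) : g 0%N = 1 ->
  (forall n : nat, (0 < n)%N ->
     ((al - be) ^+ n.-1 *: (('X - al%:P) * g n))
     = (al * (g n.-1).[al]) *: ('X - be%:P) ^+ n - (al - be) ^+ n *: ('X * g n.-1)) ->
  forall n, g n = P n.
Proof.
move=> g0 hr; elim=> [|m IH].
  by rewrite g0 /P /S big_ord1 /Acoef /= expr0 scale1r.
have := hr m.+1 isT; rewrite /= IH.
rewrite hXa hY hX -/d exprZn.
set c := al * (P m).[al].
have -> : d ^+ m *: (d *: (Zp - 1) * g m.+1) = d ^+ m.+1 *: ((Zp - 1) * g m.+1).
  by rewrite -scalerAl scalerA exprSr.
rewrite scalerA (mulrC c) -scalerA -scalerBr => /(scalerI (expf_neq0 _ dnz)) E.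
have [lam Hl] := P_step m.
have E2 : (Zp - 1) * (P m.+1 - g m.+1) = (lam - c) *: Zp ^+ m.+1.
  by rewrite scalerBl -Hl mulrBr E; ring.
have hlam : lam - c = 0.
  have := congr1 (fun p => p.[al]) E2; rewrite /= hornerM hornerZ horner_exp.
  by rewrite hornerD hornerN hornerC Zp_al subrr mul0r expr1n mulr1 => <-.
move: E2; rewrite hlam scale0r => /eqP; rewrite mulf_eq0 => /orP [/eqP hz|].
  have := congr1 (fun p => p.[be]) hz; rewrite /= hornerD hornerN hornerC Zp_be.
  by rewrite horner0 sub0r => /eqP; rewrite oppr_eq0 oner_eq0.
by rewrite subr_eq0 => /eqP.
Qed.

End Main.

Theorem mainTheorem4 (R : realType) (al be : R[i]) (g : nat -> {poly R[i]}) :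
  al != be ->
  g 0%N = 1 ->
  (forall n : nat, (0 < n)%N ->
     ((al - be) ^+ n.-1 *: (('X - al%:P) * g n))
     = (al * (g n.-1).[al]) *: ('X - be%:P) ^+ n - (al - be) ^+ n *: ('X * g n.-1)) ->
  forall n : nat, (0 < n)%N ->
    g n = \sum_(k < n) (Acoef al be n k * (al - be) ^- k) *: ('X - be%:P) ^+ k.
Proof.
move=> hd g0 hr [|n] // _.
rewrite (@gP R al be hd g g0 hr) /P S_widen ?Acoef_big //.
rewrite /S; apply: eq_bigr => k _.
by rewrite /Zp exprZn scalerA exprVn.
Qed.
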